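(* Let $X\subseteq\Omega$ be club in $\Omega$ with $0\notin X$. If $\xi\in X$ and $\xi<\Theta_X(\varepsilon_{\Omega+1})$, then there is $\zeta<\varepsilon_{\Omega+1}$ with $\Theta_X(\zeta)=\xi$.
   Context: $\Omega$ is the first uncountable ordinal; $\varepsilon_{\Omega+1}$ the least $\varepsilon>\Omega$ with $\omega^\varepsilon=\varepsilon$. Every $0<\xi<\varepsilon_{\Omega+1}$ has a unique $\Omega$-normal form $\xi=\Omega^{\alpha}\beta+\gamma$ with $0<\beta<\Omega$, $\gamma<\Omega^{\alpha}$; $C(0)=\{0\}$, $C(\Omega^\alpha\beta+\gamma)=C(\alpha)\cup C(\gamma)\cup\{\beta\}$; $\xi^*=\max C(\xi)$. $\Theta_X(\xi)$ is defined by recursion on $\xi<\varepsilon_{\Omega+1}$ as the least $\theta\in X$ with $\theta>\xi^*$ such that every $\zeta<\xi$ with $\zeta^*<\theta$ satisfies $\Theta_X(\zeta)<\theta$. With $\Omega_0=1$, $\Omega_{n+1}=\Omega^{\Omega_n}$, $\Theta_X(\varepsilon_{\Omega+1}):=\sup_{n<\omega}\Theta_X(\Omega_n)$. *)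

(* Defs.v *)
(* Ordinals below epsilon_{Omega+1} via Omega-normal forms
   with coefficients in an abstract copy of the countable ordinals Omega = omega_1. *)
From Stdlib Require Import Classical ClassicalEpsilon.

Set Implicit Arguments.

(* Omega (the first uncountable ordinal) = a well-order that is uncountable
   and all of whose proper initial segments are countable.  This characterizes
   omega_1 up to isomorphism. Elements of the carrier are the countable ordinals. *)
Record Omega1 := {
  carrier :> Type;
  olt : carrier -> carrier -> Prop;
  olt_irrefl : forall a, ~ olt a a;
  olt_trans : forall a b c, olt a b -> olt b c -> olt a c;
  olt_total : forall a b, olt a b \/ a = b \/ olt b a;
  olt_wf : well_founded olt;
  ozero : carrier;
  ozero_least : forall a, ~ olt a ozero;
  olt_countable_segments :
    forall a, exists f : nat -> carrier, forall b, olt b a -> exists n, f n = b;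
  o_uncountable : ~ exists f : nat -> carrier, forall b, exists n, f n = b
}.

Section Defs.
Variable W : Omega1.

Definition oone : W :=
  epsilon (inhabits (ozero W))
    (fun o => olt W (ozero W) o /\ forall b, olt W (ozero W) b -> ~ olt W b o).

Definition omax (x y : W) : W :=
  if excluded_middle_informative (olt W x y) then y else x.

Definition unbounded (X : W -> Prop) : Prop :=
  forall a, exists x, X x /\ olt W a x.
Definition closed (X : W -> Prop) : Prop :=
  forall l, (exists x, X x /\ olt W x l) ->
            (forall a, olt W a l -> exists x, X x /\ olt W a x /\ olt W x l) ->
            X l.
Definition club (X : W -> Prop) : Prop := closed X /\ unbounded X.

(* terms: TZ = 0, TN a b g = Omega^a * b + g *)
Inductive term : Type :=
| TZ : term
| TN : term -> W -> term -> term.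

Inductive ltt : term -> term -> Prop :=
| ltt_Z : forall a b g, ltt TZ (TN a b g)
| ltt_exp : forall a1 b1 g1 a2 b2 g2, ltt a1 a2 -> ltt (TN a1 b1 g1) (TN a2 b2 g2)
| ltt_coef : forall a b1 g1 b2 g2, olt W b1 b2 -> ltt (TN a b1 g1) (TN a b2 g2)
| ltt_tail : forall a b g1 g2, ltt g1 g2 -> ltt (TN a b g1) (TN a b g2).

(* Omega-normal form: 0 < b < Omega and g < Omega^a *)
Fixpoint nf (t : term) : Prop :=
  match t with
  | TZ => True
  | TN a b g =>
      nf a /\ b <> ozero W /\ nf g /\
      (g = TZ \/ exists a' b' g', g = TN a' b' g' /\ ltt a' a)
  end.

Fixpoint Cset (t : term) : list W :=
  match t with
  | TZ => ozero W :: nil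
  | TN a b g => Cset a ++ Cset g ++ b :: nil
  end.

Fixpoint star (t : term) : W :=
  match t with
  | TZ => ozero W
  | TN a b g => omax (star a) (omax b (star g))
  end.

Definition ThetaSpec (X : W -> Prop) (F : term -> W) : Prop :=
  forall xi, nf xi ->
    let P := fun th => X th /\ olt W (star xi) th /\
               (forall zeta, nf zeta -> ltt zeta xi -> olt W (star zeta) th ->
                  olt W (F zeta) th) in
    P (F xi) /\ forall th, P th -> ~ olt W th (F xi).

Definition Theta (X : W -> Prop) : term -> W :=
  epsilon (inhabits (fun _ => ozero W)) (ThetaSpec X).

Fixpoint OmegaN (n : nat) : term :=
  match n with
  | O => TN TZ oone TZ
  | S k => TN (OmegaN k) oone TZ
  end.

(* Theta_X(eps_{Omega+1}) := sup_n Theta_X(Omega_n) (least upper bound in Omega) *)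
Definition is_sup (S : W -> Prop) (s : W) : Prop :=
  (forall x, S x -> ~ olt W s x) /\
  (forall u, (forall x, S x -> ~ olt W u x) -> ~ olt W u s).

Definition ThetaEps (X : W -> Prop) : W :=
  epsilon (inhabits (ozero W))
    (is_sup (fun x => exists n, x = Theta X (OmegaN n))).

End Defs.

(* Main.v *)
Require Import Defs.
From Stdlib Require Import Classical ClassicalEpsilon Cantor Lia FunctionalExtensionality.
Set Implicit Arguments.

Section S1.
Variable W : Omega1.
Notation lt := (olt W).

Lemma lt_asym (x y : W) : lt x y -> ~ lt y x.
Proof. intros H1 H2. exact (olt_irrefl W x (olt_trans W _ _ _ H1 H2)). Qed.

Lemma nlt_le (x y : W) : ~ lt x y -> y = x \/ lt y x.
Proof. intros H. destruct (olt_total W x y) as [h|[h|h]]; [tauto|left; congruence|tauto]. Qed.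

Lemma lt_nlt_trans (x y z : W) : lt x y -> ~ lt z y -> lt x z.
Proof. intros H1 H2. destruct (nlt_le _ _ H2) as [->|h]; auto. exact (olt_trans W _ _ _ H1 h). Qed.

Lemma nlt_lt_trans (x y z : W) : ~ lt y x -> lt y z -> lt x z.
Proof. intros H1 H2. destruct (nlt_le _ _ H1) as [->|h]; auto. exact (olt_trans W _ _ _ h H2). Qed.

Lemma least (P : W -> Prop) : (exists x, P x) -> exists x, P x /\ forall y, P y -> ~ lt y x.
Proof.
  intros [x Px]. revert Px. induction (olt_wf W x) as [x _ IH]. intros Px.
  destruct (classic (exists y, P y /\ lt y x)) as [[y [Py Hy]]|Hn].
  - exact (IH y Hy Py).
  - exists x. split; auto. intros y Py Hy. apply Hn; eauto.
Qed.

Lemma omax_lt (x y z : W) : lt (omax W x y) z -> lt x z /\ lt y z.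
Proof.
  unfold omax. destruct (excluded_middle_informative (lt x y)) as [h|h]; intros H.
  - split; auto. exact (olt_trans W _ _ _ h H).
  - split; auto. destruct (nlt_le _ _ h) as [->|h']; auto. exact (olt_trans W _ _ _ h' H).
Qed.

Lemma bounded (h : nat -> W) : exists u, forall n, lt (h n) u.
Proof.
  assert (He : forall n, exists e : nat -> W, forall b, lt b (h n) -> exists m, e m = b)
    by (intros; apply olt_countable_segments).
  destruct (choice _ He) as [E HE].
  set (F := fun m => let (i, j) := of_nat m in match j with O => h i | S j' => E i j' end).
  destruct (not_all_ex_not _ _ (fun H => o_uncountable W (ex_intro _ F H))) as [b Hb].
  exists b. intros n.
  destruct (olt_total W (h n) b) as [H|[H|H]]; auto; exfalso; apply Hb.
  - exists (to_nat (n, 0)). unfold F. rewrite cancel_of_to. congruence.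
  - destruct (HE n b H) as [m Hm]. exists (to_nat (n, S m)). unfold F. rewrite cancel_of_to. congruence.
Qed.

Lemma exists_nonzero : exists x : W, lt (ozero W) x.
Proof.
  apply NNPP; intro H.
  apply (o_uncountable W). exists (fun _ => ozero W). intros b. exists 0.
  destruct (olt_total W (ozero W) b) as [h|[h|h]]; auto.
  - exfalso; eauto.
  - exfalso; exact (ozero_least W _ h).
Qed.

Lemma oone_spec : lt (ozero W) (oone W) /\ forall b, lt (ozero W) b -> ~ lt b (oone W).
Proof.
  unfold oone. apply epsilon_spec. apply least. apply exists_nonzero.
Qed.


Fixpoint dec (f : nat -> W) (k n : nat) : term W :=
  match k with
  | O => TZ W
  | S k' => let (c, r) := of_nat n in
      match c with
      | O => TZ W
      | S _ => let (i, r2) := of_nat r in let (j, l) := of_nat r2 in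
               TN (dec f k' j) (f i) (dec f k' l)
      end
  end.

Fixpoint tsize (t : term W) : nat :=
  match t with TZ _ => 0 | TN a _ g => S (Nat.max (tsize a) (tsize g)) end.

Lemma dec_spec (a : W) (f : nat -> W) (Hf : forall b, lt b a -> exists m, f m = b) :
  forall t, lt (star t) a -> exists n, forall k, tsize t <= k -> dec f k n = t.
Proof.
  induction t as [|x IHx b g IHg]; intros H.
  - exists (to_nat (0, 0)). intros [|k] _; simpl; auto.
  - simpl in H. apply omax_lt in H as [H1 H]. apply omax_lt in H as [H2 H3].
    destruct (IHx H1) as [nx Hx]. destruct (IHg H3) as [ng Hg]. destruct (Hf b H2) as [i Hi].
    exists (to_nat (1, to_nat (i, to_nat (nx, ng)))).
    intros [|k] Hk; simpl in Hk. lia.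
    cbn [dec]. rewrite !cancel_of_to. rewrite Hx, Hg, Hi; auto; lia.
Qed.

Lemma term_count (a : W) : exists e : nat -> term W, forall t, lt (star t) a -> exists n, e n = t.
Proof.
  destruct (olt_countable_segments W a) as [f Hf].
  exists (fun m => let (k, n) := of_nat m in dec f k n).
  intros t Ht. destruct (dec_spec a f Hf t Ht) as [n Hn].
  exists (to_nat (tsize t, n)). rewrite cancel_of_to. apply Hn. auto.
Qed.

Definition R (x y : term W) := nf x /\ nf y /\ ltt x y.

Lemma acc_TZ : Acc R (TZ W).
Proof. constructor. intros y [_ [_ H]]. inversion H. Qed.

Lemma accK : forall a, Acc R a -> forall t, nf t ->
  (forall a1 b1 g1, t = TN a1 b1 g1 -> a1 = a \/ R a1 a) -> Acc R t.
Proof.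
  intros a Ha. induction Ha as [a _ IHa].
  intros t nft H. destruct t as [|a1 b1 g1]. apply acc_TZ.
  destruct (H a1 b1 g1 eq_refl) as [->|Hr].
  2:{ apply (IHa a1 Hr); auto. intros ? ? ? E; injection E; intros; subst; auto. }
  clear H. revert g1 nft. induction (olt_wf W b1) as [b _ IHb]. intros g nft.
  assert (Ag : Acc R g).
  { destruct nft as [nfa [_ [nfg [->|[a' [b' [g' [-> Hl]]]]]]]]. apply acc_TZ.
    apply (IHa a'). split; [apply nfg|split; auto]. exact nfg.
    intros ? ? ? E; injection E; intros; subst; auto. }
  revert nft. induction Ag as [g _ IHg]. intros nft.
  constructor. intros y [nfy [_ Hl]]. inversion Hl; subst.
  - apply acc_TZ.
  - apply (IHa a1). split; [apply nfy|split; [apply nft|auto]]. exact nfy.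
    intros ? ? ? E; injection E; intros; subst; auto.
  - apply IHb; auto.
  - apply IHg; auto. split; [apply nfy|split; [apply nft|auto]].
Qed.

Lemma R_wf : well_founded R.
Proof.
  intro t. destruct (classic (nf t)) as [nft|nnf].
  2:{ constructor. intros y [_ [h _]]. contradiction. }
  induction t as [|a IHa b g _]. apply acc_TZ.
  apply (accK (IHa (proj1 nft))); auto.
  intros ? ? ? E; injection E; intros; subst; auto.
Qed.

End S1.
Arguments term_count {W} a. Arguments bounded {W} h. Arguments least {W} P _.
Arguments omax_lt {W} x y z _. Arguments nlt_lt_trans {W} x y z _ _.
Arguments lt_nlt_trans {W} x y z _ _. Arguments nlt_le {W} x y _. Arguments lt_asym {W} x y _ _.
Unset Implicit Arguments.
Section S2.
Variable W : Omega1.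
Notation lt := (olt W).
Variable X : W -> Prop.
Hypothesis HX : club W X.

Lemma closure (G : term W -> W) (s : W) :
  exists th, X th /\ lt s th /\ forall zeta, lt (star zeta) th -> lt (G zeta) th.
Proof.
  assert (HB : forall a, exists u, forall zeta, lt (star zeta) a -> lt (G zeta) u).
  { intros a. destruct (term_count a) as [e He].
    destruct (bounded (fun n => G (e n))) as [u Hu]. exists u.
    intros z Hz. destruct (He z Hz) as [n <-]. apply Hu. }
  destruct (choice _ HB) as [Bf HBf].
  assert (HN : forall a, exists x, X x /\ lt (omax W a (Bf a)) x).
  { intros a. destruct HX as [_ Hu]. apply Hu. }
  destruct (choice _ HN) as [nx Hnx].
  set (th := fix th n := match n with O => nx s | S m => nx (th m) end).
  assert (Xth : forall n, X (th n)) by (intros [|n]; apply Hnx).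
  assert (Sth : forall n, lt (th n) (th (S n)) /\ lt (Bf (th n)) (th (S n))).
  { intros n. exact (omax_lt _ _ _ (proj2 (Hnx (th n)))). }
  assert (s0 : lt s (th 0)) by exact (proj1 (omax_lt _ _ _ (proj2 (Hnx s)))).
  destruct (least (fun u => forall n, lt (th n) u) (bounded th)) as [l [Hl Hlmin]].
  assert (key : forall a, lt a l -> exists n, lt a (th n)).
  { intros a Ha. destruct (classic (forall n, lt (th n) a)) as [H|H].
    - exfalso. exact (Hlmin a H Ha).
    - destruct (not_all_ex_not _ _ H) as [n Hn]. exists (S n).
      exact (nlt_lt_trans _ _ _ Hn (proj1 (Sth n))). }
  exists l. split; [|split].
  - destruct HX as [Hc _]. apply Hc.
    + exists (th 0). auto.
    + intros a Ha. destruct (key a Ha) as [n Hn]. exists (th n). auto.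
  - exact (olt_trans W _ _ _ s0 (Hl 0)).
  - intros z Hz. destruct (key _ Hz) as [n Hn].
    apply (olt_trans W _ (th (S n))); auto.
    apply (olt_trans W _ (Bf (th n))); [apply HBf; auto| apply Sth].
Qed.

Definition Pr (xi : term W) (rec : forall y, R y xi -> W) (th : W) : Prop :=
  X th /\ lt (star xi) th /\ forall zeta (H : R zeta xi), lt (star zeta) th -> lt (rec zeta H) th.

Definition body (xi : term W) (rec : forall y, R y xi -> W) : W :=
  epsilon (inhabits (ozero W)) (fun th => Pr xi rec th /\ forall t, Pr xi rec t -> ~ lt t th).

Definition Fth : term W -> W := Fix (@R_wf W) (fun _ => W) body.

Lemma Fth_eq xi : Fth xi = body xi (fun y _ => Fth y).
Proof.
  unfold Fth. refine (Fix_eq (@R_wf W) (fun _ => W) body _ xi). intros x f g Hfg.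
  assert (E : f = g).
  { apply functional_extensionality_dep. intro y.
    apply functional_extensionality_dep. intro p. apply Hfg. }
  rewrite E. reflexivity.
Qed.

Lemma Fth_spec : ThetaSpec X Fth.
Proof.
  intros xi nfxi. simpl.
  assert (Hb : Pr xi (fun y _ => Fth y) (Fth xi) /\
               forall t, Pr xi (fun y _ => Fth y) t -> ~ lt t (Fth xi)).
  { rewrite Fth_eq. unfold body. apply epsilon_spec. apply least.
    destruct (closure Fth (star xi)) as [th [H1 [H2 H3]]].
    exists th. split; auto. }
  destruct Hb as [[H1 [H2 H3]] H4]. split.
  - split; auto. split; auto. intros z nfz lz Hz. exact (H3 z (conj nfz (conj nfxi lz)) Hz).
  - intros t [T1 [T2 T3]]. apply H4. split; auto. split; auto.
    intros z [nfz [_ lz]] Hz. auto.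
Qed.

Lemma Theta_spec : ThetaSpec X (Theta X).
Proof. unfold Theta. apply epsilon_spec. exists Fth. apply Fth_spec. Qed.

End S2.

Lemma least_R (W : Omega1) (P : term W -> Prop) :
  (exists x, P x) -> exists x, P x /\ forall y, P y -> ~ R y x.
Proof.
  intros [x Px]. revert Px. induction (R_wf x) as [x _ IH]. intros Px.
  destruct (classic (exists y, P y /\ R y x)) as [[y [Py Hy]]|Hn].
  - exact (IH y Hy Py).
  - exists x. split; auto. intros y Py Hy. apply Hn; eauto.
Qed.

Lemma nf_OmegaN (W : Omega1) n : nf (OmegaN W n).
Proof.
  assert (Hne : oone W <> ozero W).
  { intro E. pose proof (proj1 (oone_spec W)) as H. rewrite E in H. exact (olt_irrefl W _ H). }
  induction n; simpl; repeat split; auto.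
Qed.

Lemma omax_same (W : Omega1) (x : W) : omax W x x = x.
Proof. unfold omax. destruct (excluded_middle_informative _); auto. Qed.

Lemma star_OmegaN (W : Omega1) n : star (OmegaN W n) = oone W.
Proof.
  pose proof (proj1 (oone_spec W)) as H.
  assert (E1 : omax W (oone W) (ozero W) = oone W).
  { unfold omax. destruct (excluded_middle_informative _) as [h|h]; auto.
    exfalso. exact (ozero_least W _ h). }
  assert (E2 : omax W (ozero W) (oone W) = oone W).
  { unfold omax. destruct (excluded_middle_informative _) as [h|h]; auto. contradiction. }
  induction n; simpl.
  - rewrite E1. exact E2.
  - rewrite IHn, E1. apply omax_same.
Qed.

Theorem corollary3p4 (W : Omega1) (X : W -> Prop) :
  club W X -> ~ X (ozero W) ->
  forall xi : W, X xi -> olt W xi (ThetaEps W X) ->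
  exists zeta : term W, nf zeta /\ Theta X zeta = xi.
Proof.
  intros HX H0 xi Xxi Hlt.
  pose proof (Theta_spec W X HX) as Hsp.
  set (S := fun x => exists n, x = Theta X (OmegaN W n)).
  assert (Hs : is_sup W S (ThetaEps W X)).
  { unfold ThetaEps. apply epsilon_spec.
    destruct (bounded (fun n => Theta X (OmegaN W n))) as [u Hu].
    destruct (least (fun u => forall x, S x -> ~ olt W u x)) as [s [Hs1 Hs2]].
    - exists u. intros x [n ->]. apply lt_asym. apply Hu.
    - exists s. split; auto. }
  assert (Hn : exists n, olt W xi (Theta X (OmegaN W n))).
  { apply NNPP. intro H. apply (proj2 Hs xi); auto.
    intros x [n ->] Hx. apply H. eauto. }
  destruct Hn as [n Hn].
  assert (Hpos : olt W (ozero W) xi).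
  { destruct (olt_total W (ozero W) xi) as [h|[h|h]]; auto.
    - subst; contradiction.
    - exfalso. exact (ozero_least W _ h). }
  assert (HSne : exists eta, nf eta /\ olt W (star eta) xi /\ ~ olt W (Theta X eta) xi).
  { destruct (classic (olt W (oone W) xi)) as [h|h].
    - exists (OmegaN W n). split; [apply nf_OmegaN|]. rewrite star_OmegaN. split; auto.
      apply lt_asym; auto.
    - destruct (nlt_le _ _ h) as [E|h'].
      2:{ exfalso. exact (proj2 (oone_spec W) xi Hpos h'). }
      subst xi. exists (TZ W). split; [exact I|]. split; [exact Hpos|].
      destruct (Hsp (TZ W) I) as [[X0 [L0 _]] _].
      apply (proj2 (oone_spec W)). exact L0. }
  destruct (least_R W _ HSne) as [eta [[nfe [Le Ge]] Hmin]].
  exists eta. split; auto.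
  destruct (Hsp eta nfe) as [_ Hm].
  destruct (nlt_le _ _ Ge) as [E|h]; auto.
  exfalso. apply (Hm xi); auto.
  split; auto. split; auto.
  intros z nfz lz Hz. apply NNPP. intro Hc.
  apply (Hmin z); [split; auto| split; auto].
Qed.
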